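(* Let $\mathcal{U}_\chi(\mathfrak{g})=\bigoplus_\lambda A_\lambda$ be the block decomposition and $b$ the bilinear form described in the context, and let $V=V_i$ be a term of the PBW filtration on $\mathcal{U}_\chi(\mathfrak{g})$. Then the orthogonal complement $V^\perp$ with respect to $b$ is also a term of the PBW filtration, and \[\pi_\lambda(V)^{\perp_\lambda}=A_\lambda\cap V^\perp,\] where $\perp_\lambda$ denotes orthogonal complement in $A_\lambda$ with respect to the restriction $b_\lambda$ of $b$ to $A_\lambda\times A_\lambda$. In particular $\dim\pi_\lambda(V)+\dim(A_\lambda\cap V^\perp)=\dim A_\lambda$.
   Context: Let $k$ be an algebraically closed field of characteristic $p>0$, $G$ a semisimple connected simply connected algebraic group over $k$ with Lie algebra $\mathfrak{g}$ (a restricted Lie algebra with $p$-map $x\mapsto x^{[p]}$), $\chi\in\mathfrak{g}^*$ and $\mathcal{U}_\chi(\mathfrak{g})=\mathcal{U}(\mathfrak{g})/\langle x^p-x^{[p]}-\chi(x)^p:x\in\mathfrak{g}\rangle$. Fix a basis $x_1,\dots,x_N$ of $\mathfrak{g}$; the monomials $\prod_i x_i^{e_i}$, $0\le e_i\le p-1$, form a basis of $\mathcal{U}_\chi(\mathfrak{g})$. $V_d$ is the span of such monomials with $\sum e_i\le d$ (the PBW filtration). Let $\varphi:\mathcal{U}_\chi(\mathfrak{g})\to k$ be the linear map with $\varphi(\prod_i x_i^{p-1})=1$ and $\varphi=0$ on all other basis monomials, and $b(u,v)=\varphi(uv)$; it is known that $b$ is a non-degenerate associative bilinear form. $\mathcal{U}_\chi(\mathfrak{g})=\bigoplus_\lambda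 A_\lambda$ is the block decomposition, $A_\lambda=\pi_\lambda\mathcal{U}_\chi(\mathfrak{g})$ with $\pi_\lambda$ central idempotents, and $\pi_\lambda$ also denotes the projection $u\mapsto\pi_\lambda u$. *)

(* Defs.v *)
From HB Require Import structures.
From mathcomp Require Import all_boot all_order all_algebra all_field.
Set Implicit Arguments. Unset Strict Implicit. Unset Printing Implicit Defensive.
Import GRing.Theory.
Local Open Scope ring_scope.

Section UChi.
Variables (k : fieldType) (p n N : nat).
(* g : a restricted Lie subalgebra of gl_n(k), with p-map x |-> x^p *)
Variable g : {vspace 'M[k]_n}.
Variable chi : 'M[k]_n -> k.   (* only its restriction to g matters *)

Definition restricted_subalg : Prop :=
  (forall x y, x \in g -> y \in g -> x * y - y * x \in g) /\
  (forall x, x \in g -> x ^+ p \in g).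

Definition uchi_rel (B : falgType k) (f : 'M[k]_n -> B) : Prop :=
  forall x y, x \in g -> y \in g ->
    f (x * y - y * x) = f x * f y - f y * f x /\
    f x ^+ p - f (x ^+ p) = (chi x) ^+ p *: 1.

(* (A, iota) is the reduced enveloping algebra U_chi(g): the quotient of U(g)
   by the relations, i.e. the universal algebra for these relations. *)
Definition is_Uchi (A : falgType k) (iota : {linear 'M[k]_n -> A}) : Prop :=
  uchi_rel iota /\
  forall (B : falgType k) (f : {linear 'M[k]_n -> B}), uchi_rel f ->
    (exists h : 'AHom(A, B), forall x, x \in g -> h (iota x) = f x) /\
    (forall h1 h2 : 'AHom(A, B),
        (forall x, x \in g -> h1 (iota x) = f x) ->
        (forall x, x \in g -> h2 (iota x) = f x) -> forall a, h1 a = h2 a).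

Variables (A : falgType k) (iota : 'M[k]_n -> A) (xb : N.-tuple 'M[k]_n).

Definition pbw_mono (e : {ffun 'I_N -> 'I_p}) : A :=
  \prod_(i < N) iota (tnth xb i) ^+ e i.

Definition pbw_deg (e : {ffun 'I_N -> 'I_p}) : nat := \sum_(i < N) (e i : nat).

Definition pbw_monos : #|{ffun 'I_N -> 'I_p}|.-tuple A :=
  [tuple pbw_mono (enum_val i) | i < #|{ffun 'I_N -> 'I_p}|].

(* V_d : span of monomials of total degree <= d (d an integer; V_d = 0 if d < 0) *)
Definition pbw_filt (d : int) : {vspace A} :=
  <<[seq pbw_mono e | e <- enum {ffun 'I_N -> 'I_p} & ((pbw_deg e)%:Z <= d)%R]>>%VS.

(* phi : coefficient of the top monomial prod_i x_i^{p-1} in the PBW basis *)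
Definition phi (u : A) : k :=
  \sum_(e : {ffun 'I_N -> 'I_p} | [forall i, (e i : nat) == p.-1])
     coord pbw_monos (enum_rank e) u.

Definition bform (u v : A) : k := phi (u * v).

Definition central (e : A) : Prop := forall a : A, e * a = a * e.
Definition central_idem (e : A) : Prop := central e /\ e * e = e.
Definition block_idem (e : A) : Prop :=
  central_idem e /\ e != 0 /\
  ~ (exists e1 e2, central_idem e1 /\ central_idem e2 /\ e1 != 0 /\ e2 != 0 /\
                    e1 * e2 = 0 /\ e = e1 + e2).

(* the block A_lambda = pi_lambda U and the projection pi_lambda(V) *)
Definition block_of (e : A) : {vspace A} := (<[e]> * fullv)%VS.
Definition proj_block (e : A) (V : {vspace A}) : {vspace A} := (<[e]> * V)%VS.

End UChi.

(* Main.v *)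
Require Import Defs.
From HB Require Import structures.
From mathcomp Require Import all_boot all_order all_algebra all_field.
From mathcomp Require Import zify.
Set Implicit Arguments. Unset Strict Implicit. Unset Printing Implicit Defensive.
Import Order.TTheory GRing.Theory Num.Theory.
Local Open Scope ring_scope.

Section Gen.
Variables (k : fieldType) (A : falgType k).

Lemma span_ind (X : seq A) (P : A -> Prop) :
  P 0 -> (forall a b, P a -> P b -> P (a + b)) -> (forall c a, P a -> P (c *: a)) ->
  (forall x, x \in X -> P x) -> forall w, w \in <<X>>%VS -> P w.
Proof.
move=> P0 PD PZ PX w wX.
have -> := @coord_span _ _ _ (in_tuple X) w wX.
apply: (big_ind P) => // i _; apply: PZ; apply: PX; exact: mem_nth.
Qed.

Lemma prodv_ind (U V : {vspace A}) (P : A -> Prop) :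
  P 0 -> (forall a b, P a -> P b -> P (a + b)) -> (forall c a, P a -> P (c *: a)) ->
  (forall u v, u \in U -> v \in V -> P (u * v)) -> forall w, w \in (U * V)%VS -> P w.
Proof.
move=> P0 PD PZ PX w; rewrite unlock => wX.
apply: (span_ind P0 PD PZ _ wX) => x /allpairsP [[u v] /= [Uu Vv ->]].
by apply: PX; apply: vbasis_mem.
Qed.

Lemma prodv_img (lam : A) (U : {vspace A}) w :
  w \in (<[lam]> * U)%VS -> exists2 v, v \in U & w = lam * v.
Proof.
move=> wU.
have : w \in (amull lam @: U)%VS.
  move: w wU; apply/subvP/prodvP => _ v /vlineP [c ->] vU.
  have -> : c *: lam * v = amull lam (c *: v) by rewrite lfunE /= -scalerAr -scalerAl.
  by rewrite memv_img // memvZ.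
by case/memv_imgP => v vU ->; exists v => //; rewrite lfunE.
Qed.
End Gen.


Section Filt.
Variables (k : fieldType) (A : falgType k) (N p : nat) (y : nat -> A).

Definition Sv : {vspace A} := <<[tuple y i | i < N]>>%VS.
Definition F d : {vspace A} := ((1 + Sv) ^+ d)%VS.
Definition Fm d : {vspace A} := if d is d'.+1 then F d' else 0%VS.

Lemma y_S i : (i < N)%N -> y i \in Sv.
Proof.
move=> hi; rewrite /Sv; apply: memv_span.
have -> : y i = tnth [tuple y i | i < N] (Ordinal hi) by rewrite tnth_mktuple.
exact: mem_tnth.
Qed.

Lemma F1_1 : (1 : A) \in F 0.
Proof. by rewrite /F expv0 memv_line. Qed.

Lemma S_F1 z : z \in Sv -> z \in F 1.
Proof. by move=> zS; rewrite /F expv1; apply: (subvP (addvSr _ _)). Qed.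

Lemma one_F1 : (1 : A) \in F 1.
Proof. by rewrite /F expv1; apply: (subvP (addvSl _ _)); rewrite memv_line. Qed.

Lemma F_mul a b u v : u \in F a -> v \in F b -> u * v \in F (a + b).
Proof. by move=> ua vb; rewrite /F expvD memv_mul. Qed.

Lemma F_S a u : u \in F a -> u \in F a.+1.
Proof. by move=> ua; rewrite -addn1 -[u]mulr1 F_mul // one_F1. Qed.

Lemma F_mono a b u : (a <= b)%N -> u \in F a -> u \in F b.
Proof.
move=> /subnKC <-; elim: (b - a)%N => [|m IH] ua; first by rewrite addn0.
by rewrite addnS F_S // IH.
Qed.

Lemma Fm_mono a b u : (a <= b)%N -> u \in Fm a -> u \in Fm b.
Proof.
case: a => [|a] /=; first by rewrite memv0 => _ /eqP ->; exact: mem0v.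
by case: b => // b; rewrite ltnS /= => ab; apply: F_mono.
Qed.

Lemma F_Fm a u : u \in F a -> u \in Fm a.+1.
Proof. by []. Qed.

Lemma Fm_mulr a b u v : u \in Fm a -> v \in F b -> u * v \in Fm (a + b).
Proof.
case: a => [|a] /=; first by rewrite memv0 => /eqP -> _; rewrite mul0r mem0v.
by move=> ua vb; exact: F_mul.
Qed.

Lemma Fm_mull a b u v : u \in F b -> v \in Fm a -> u * v \in Fm (b + a).
Proof.
case: a => [|a] /=; first by rewrite memv0 => _ /eqP ->; rewrite mulr0 mem0v.
by move=> ua vb; rewrite addnS; exact: F_mul.
Qed.

Lemma Fm_F a u : u \in Fm a -> u \in F a.
Proof. by case: a => [|a] /=; [rewrite memv0 => /eqP ->; exact: mem0v | exact: F_S]. Qed.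

Lemma expr_F i t : (i < N)%N -> y i ^+ t \in F t.
Proof.
move=> hi; elim: t => [|t IH]; first by rewrite expr0 F1_1.
by rewrite exprS -add1n F_mul // S_F1 // y_S.
Qed.

Hypothesis hcomm : forall i j, (i < N)%N -> (j < N)%N -> y i * y j - y j * y i \in Sv.
Hypothesis hpow : forall i, (i < N)%N -> y i ^+ p \in (1 + Sv)%VS.

Lemma commS z : z \in Sv -> forall a, a \in F 1 -> a * z - z * a \in Sv.
Proof.
move=> zS a; rewrite /F expv1 => /memv_addP [a1 /vlineP [c ->] [a2 a2S ->]].
rewrite mulrDl mulrDr -scalerAl -scalerAr mul1r mulr1 opprD addrACA subrr add0r.
move: a2 a2S; apply: span_ind.
- by rewrite mul0r mulr0 subrr mem0v.
- by move=> a3 b ha hb; rewrite mulrDl mulrDr opprD addrACA memvD.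
- by move=> c' a3 ha; rewrite -scalerAl -scalerAr -scalerBr memvZ.
move=> x /mapP [j _ ->] {c}; move: z zS; apply: span_ind.
- by rewrite mul0r mulr0 subrr mem0v.
- by move=> a3 b ha hb; rewrite mulrDl mulrDr opprD addrACA memvD.
- by move=> c' a3 ha; rewrite -scalerAl -scalerAr -scalerBr memvZ.
by move=> x2 /mapP [i _ ->]; apply: hcomm; apply: ltn_ord.
Qed.

Lemma commF s a z : a \in F s -> z \in Sv -> a * z - z * a \in F s.
Proof.
elim: s a => [|s IH] a.
  rewrite /F expv0 => /vlineP [c ->] _.
  by rewrite -scalerAl -scalerAr mul1r mulr1 subrr mem0v.
move=> ha zS; have ha' : a \in ((1 + Sv) ^+ s * (1 + Sv))%VS by rewrite -expvSr.
move: a ha' {ha}; apply: prodv_ind.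
- by rewrite mul0r mulr0 subrr mem0v.
- by move=> a b ha hb; rewrite mulrDl mulrDr opprD addrACA memvD.
- by move=> c' a ha; rewrite -scalerAl -scalerAr -scalerBr memvZ.
move=> u v hu hv.
have -> : u * v * z - z * (u * v) = u * (v * z - z * v) + (u * z - z * u) * v.
  by rewrite mulrBr mulrBl !mulrA addrA subrK.
have hv1 : v \in F 1 by rewrite /F expv1.
rewrite -[s.+1]addn1 memvD //; apply: F_mul => //; first exact: S_F1 (commS zS hv1).
exact: IH.
Qed.

Definition Mo (c : nat -> nat) : A := \prod_(0 <= i < N) y i ^+ c i.
Definition dg (c : nat -> nat) : nat := (\sum_(0 <= i < N) c i)%N.

Lemma Mo_ext c c' : (forall i, (i < N)%N -> c i = c' i) -> Mo c = Mo c'.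
Proof.
move=> h; apply: eq_big_nat => i /andP [_ hi]; by rewrite h.
Qed.

Lemma dg_ext c c' : (forall i, (i < N)%N -> c i = c' i) -> dg c = dg c'.
Proof.
move=> h; apply: eq_big_nat => i /andP [_ hi]; by rewrite h.
Qed.

Lemma prod_F (r : seq nat) c : all (fun i => i < N)%N r ->
  \prod_(i <- r) y i ^+ c i \in F (\sum_(i <- r) c i).
Proof.
elim: r => [|i r IH] /=; first by rewrite !big_nil F1_1.
by case/andP => hi hr; rewrite !big_cons F_mul // ?expr_F // IH.
Qed.

Lemma prod_F_nat m m' c : (m' <= N)%N ->
  \prod_(m <= i < m') y i ^+ c i \in F (\sum_(m <= i < m') c i).
Proof.
move=> hm'; apply: prod_F; apply/allP => i; rewrite mem_index_iota.
by case/andP => _ hi; apply: leq_trans hm'.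
Qed.

Lemma Mo_F c : Mo c \in F (dg c).
Proof. exact: prod_F_nat. Qed.

Lemma Mo_split c j : (j < N)%N -> Mo c =
  (\prod_(0 <= i < j) y i ^+ c i) * y j ^+ c j * \prod_(j.+1 <= i < N) y i ^+ c i.
Proof.
move=> hj; rewrite /Mo (big_cat_nat (leq0n j) (ltnW hj)) /= (big_ltn hj).
by rewrite mulrA.
Qed.

Lemma dg_split c j : (j < N)%N -> dg c =
  (\sum_(0 <= i < j) c i + c j + \sum_(j.+1 <= i < N) c i)%N.
Proof.
move=> hj; rewrite /dg (big_cat_nat (leq0n j) (ltnW hj)) /= (big_ltn hj).
by rewrite addnA.
Qed.

Definition addd (c : nat -> nat) j t := fun i => (c i + (i == j) * t)%N.

Lemma dg_addd c j t : (j < N)%N -> dg (addd c j t) = (dg c + t)%N.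
Proof.
move=> hj; rewrite (dg_split _ hj) (dg_split c hj) /addd eqxx mul1n.
have e1 : (\sum_(0 <= i < j) (c i + (i == j) * t) = \sum_(0 <= i < j) c i)%N.
  apply: eq_big_nat => i /andP [_ hi]; by rewrite (ltn_eqF hi) mul0n addn0.
have e2 : (\sum_(j.+1 <= i < N) (c i + (i == j) * t) = \sum_(j.+1 <= i < N) c i)%N.
  apply: eq_big_nat => i /andP [hi _]; by rewrite (gtn_eqF hi) mul0n addn0.
rewrite e1 e2; lia.
Qed.

Lemma claimC c j : (j < N)%N -> Mo c * y j - Mo (addd c j 1) \in F (dg c).
Proof.
move=> hj; rewrite (Mo_split _ hj) (Mo_split (addd c j 1) hj) (dg_split c hj).
rewrite /addd eqxx mul1n addn1.
have -> : (\prod_(0 <= i < j) y i ^+ (c i + (i == j) * 1)%N) = \prod_(0 <= i < j) y i ^+ c i.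
  apply: eq_big_nat => i /andP [_ hi]; by rewrite (ltn_eqF hi) mul0n addn0.
have -> : (\prod_(j.+1 <= i < N) y i ^+ (c i + (i == j) * 1)%N) = \prod_(j.+1 <= i < N) y i ^+ c i.
  apply: eq_big_nat => i /andP [hi _]; by rewrite (gtn_eqF hi) mul0n addn0.
set P := \prod_(0 <= i < j) _; set Q := \prod_(j.+1 <= i < N) _.
have -> : P * y j ^+ c j * Q * y j - P * y j ^+ (c j).+1 * Q = P * y j ^+ c j * (Q * y j - y j * Q).
  by rewrite exprSr mulrBr !mulrA.
apply: F_mul; first by apply: F_mul; [exact: prod_F_nat (ltnW hj) | exact: expr_F].
by apply: commF; [exact: prod_F_nat | exact: y_S].
Qed.

Lemma claimCpow c j t : (j < N)%N -> Mo c * y j ^+ t - Mo (addd c j t) \in Fm (dg c + t).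
Proof.
move=> hj; elim: t => [|t IH].
  rewrite expr0 mulr1 (@Mo_ext (addd c j 0) c); first by rewrite subrr mem0v.
  by move=> i _; rewrite /addd muln0 addn0.
have -> : Mo c * y j ^+ t.+1 - Mo (addd c j t.+1) =
   (Mo c * y j ^+ t - Mo (addd c j t)) * y j + (Mo (addd c j t) * y j - Mo (addd (addd c j t) j 1)).
  rewrite exprSr mulrA mulrBl addrA subrK (@Mo_ext (addd c j t.+1) (addd (addd c j t) j 1)) // => i _.
  by rewrite /addd; case: (i == j); rewrite /= ?mul1n ?mul0n; lia.
apply: memvD.
  by rewrite addnS -addn1; apply: Fm_mulr => //; apply: S_F1; apply: y_S.
by rewrite addnS; apply: F_Fm; rewrite -(dg_addd _ _ hj); apply: claimC.
Qed.

Definition addc (c d : nat -> nat) m := fun i => (c i + (if (i < m)%N then d i else 0))%N.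

Lemma claimCprod c d m : (m <= N)%N ->
  Mo c * \prod_(0 <= i < m) y i ^+ d i - Mo (addc c d m) \in Fm (dg c + \sum_(0 <= i < m) d i).
Proof.
elim: m => [|m IH] hm.
  rewrite big_geq // mulr1 big_geq // addn0 (@Mo_ext (addc c d 0) c); first by rewrite subrr mem0v.
  by move=> i _; rewrite /addc /= addn0.
rewrite big_nat_recr //= big_nat_recr //=.
have hmN : (m < N)%N by [].
set P := \prod_(0 <= i < m) _.
have -> : Mo c * (P * y m ^+ d m) - Mo (addc c d m.+1) =
  (Mo c * P - Mo (addc c d m)) * y m ^+ d m +
  (Mo (addc c d m) * y m ^+ d m - Mo (addd (addc c d m) m (d m))).
  rewrite mulrA mulrBl addrA subrK (@Mo_ext (addc c d m.+1) (addd (addc c d m) m (d m))) // => i _.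
  rewrite /addd /addc ltnS leq_eqVlt; case: (i =P m) => [->|_] /=.
    by rewrite ltnn /= mul1n addn0.
  by rewrite mul0n addn0.
apply: memvD; first by rewrite addnA; apply: Fm_mulr; [apply: IH; exact: ltnW | exact: expr_F].
have -> : (dg c + (\sum_(0 <= i < m) d i + d m) = dg (addc c d m) + d m)%N.
  rewrite addnA; congr (_ + _)%N; rewrite /dg /addc big_split /=; congr (_ + _)%N.
  rewrite (big_cat_nat (leq0n m) (ltnW hmN)) /=.
  rewrite (@big1_seq _ _ _ _ (index_iota m N)) ?addn0; last first.
    by move=> i /andP [_]; rewrite mem_index_iota => /andP [hi _]; rewrite ltnNge hi.
  by apply: eq_big_nat => i /andP [_ ->].
exact: claimCpow.
Qed.

Lemma claimKM c d : Mo c * Mo d - Mo (fun i => c i + d i)%N \in Fm (dg c + dg d).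
Proof.
have := @claimCprod c d N (leqnn N); rewrite -/(Mo d) -/(dg d).
by rewrite (@Mo_ext (addc c d N) (fun i => c i + d i)%N) // => i hi; rewrite /addc hi.
Qed.

Lemma dg_add c d : dg (fun i => c i + d i)%N = (dg c + dg d)%N.
Proof. by rewrite /dg big_split. Qed.

Hypothesis hp2 : (1 < p)%N.

Lemma Mo_big c j : (j < N)%N -> (p <= c j)%N -> Mo c \in Fm (dg c).
Proof.
move=> hj hpc; rewrite (Mo_split _ hj) (dg_split _ hj).
rewrite -(subnK hpc) exprD.
apply: (@Fm_mono ((\sum_(0 <= i < j) c i + (c j - p) + 1 + \sum_(j.+1 <= i < N) c i).+1)).
  have : (2 <= p)%N by []; lia.
apply: F_Fm; rewrite mulrA; apply: F_mul; last exact: prod_F_nat.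
apply: F_mul; [apply: F_mul; [exact: prod_F_nat (ltnW hj) | exact: expr_F] |].
by rewrite /F expv1; apply: hpow.
Qed.

End Filt.


Section PBW.
Variables (k : fieldType) (p n N : nat) (A : falgType k) (iota : 'M[k]_n -> A)
  (xb : N.-tuple 'M[k]_n).
Definition yy (i : nat) : A := iota (nth 0 xb i).
Hypothesis hp2 : (1 < p)%N.
Hypothesis hcomm : forall i j, (i < N)%N -> (j < N)%N -> yy i * yy j - yy j * yy i \in Sv N yy.
Hypothesis hpow : forall i, (i < N)%N -> yy i ^+ p \in (1 + Sv N yy)%VS.
Hypothesis hPBW : basis_of fullv (pbw_monos p iota xb).

Local Notation E := {ffun 'I_N -> 'I_p}.
Local Notation mono := (@pbw_mono k p n N A iota xb).
Local Notation deg := (@pbw_deg p N).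
Local Notation W := (pbw_filt p iota xb).
Local Notation FF := (F N yy).
Local Notation MM := (Mo N yy).
Local Notation DG := (dg N).

Definition ce (e : E) : nat -> nat :=
  fun i => oapp (fun o : 'I_N => nat_of_ord (e o)) 0%N (insub i).

Lemma ce_ord e (o : 'I_N) : ce e o = e o.
Proof. by rewrite /ce valK. Qed.

Lemma mono_Mo e : mono e = MM (ce e).
Proof.
rewrite /pbw_mono /Mo big_mkord; apply: eq_bigr => o _.
by rewrite ce_ord /yy -tnth_nth.
Qed.

Lemma deg_dg e : deg e = DG (ce e).
Proof. by rewrite /pbw_deg /dg big_mkord; apply: eq_bigr => o _; rewrite ce_ord. Qed.

Definition o0 : 'I_p := Ordinal (ltnW hp2).
Definition ec (c : nat -> nat) : E := [ffun o : 'I_N => insubd o0 (c (nat_of_ord o))].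

Lemma ec_val (c : nat -> nat) (o : 'I_N) : (c o < p)%N -> (ec c o : nat) = c o.
Proof. by rewrite ffunE val_insubd => ->. Qed.

Lemma Mo_mono c : (forall i, (i < N)%N -> (c i < p)%N) ->
  MM c = mono (ec c) /\ deg (ec c) = DG c.
Proof.
move=> hc; rewrite mono_Mo deg_dg; split; [apply: Mo_ext | apply: dg_ext];
  move=> i hi; have -> : i = Ordinal hi by [];
  by rewrite ce_ord ec_val //; apply: hc.
Qed.

Lemma dich (c : nat -> nat) :
  (forall i, (i < N)%N -> (c i < p)%N) \/ (exists2 i, (i < N)%N & (p <= c i)%N).
Proof.
case: (boolP [forall o : 'I_N, (c o < p)%N]) => [/forallP h | /forallPn [o ho]].
  by left => i hi; apply: (h (Ordinal hi)).
by right; exists o => //; rewrite leqNgt.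
Qed.

Lemma mono_W e d : ((deg e)%:Z <= d)%R -> mono e \in W d.
Proof.
move=> hd; apply: memv_span; apply: map_f; by rewrite mem_filter hd mem_enum.
Qed.

Lemma W_ind d (P : A -> Prop) :
  P 0 -> (forall a b, P a -> P b -> P (a + b)) -> (forall c a, P a -> P (c *: a)) ->
  (forall e, ((deg e)%:Z <= d)%R -> P (mono e)) -> forall w, w \in W d -> P w.
Proof.
move=> P0 PD PZ PX; apply: span_ind => // x /mapP [e].
by rewrite mem_filter => /andP [he _] ->; apply: PX.
Qed.

Lemma W_mono d d' u : (d <= d')%R -> u \in W d -> u \in W d'.
Proof.
move=> dd'; move: u; apply: W_ind.
- exact: mem0v.
- by move=> a b ha hb; apply: memvD.
- by move=> c a ha; apply: memvZ.
by move=> e he; apply: mono_W; apply: le_trans dd'.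
Qed.

Lemma Mo_W c : (forall i, (i < N)%N -> (c i < p)%N) -> MM c \in W (DG c)%:Z.
Proof. by move=> hc; case: (Mo_mono hc) => -> hd; apply: mono_W; rewrite hd. Qed.

Lemma F_W d u : u \in FF d -> u \in W d%:Z.
Proof.
elim: d u => [|d IH] u.
  rewrite /F expv0 => /vlineP [c ->]; apply: memvZ.
  have -> : (1 : A) = MM (fun _ => 0%N) by rewrite /Mo big1 // => i _; rewrite expr0.
  have := @Mo_W (fun _ => 0%N) (fun _ _ => ltnW hp2).
  by rewrite /dg big1.
move=> hu; have : u \in (FF d * (1 + Sv N yy))%VS by rewrite /F -expvSr.
move: u {hu}; apply: prodv_ind.
- exact: mem0v.
- by move=> a b ha hb; apply: memvD.
- by move=> c a ha; apply: memvZ.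
move=> a v /IH ha hv; move: a ha; apply: W_ind.
- by rewrite mul0r mem0v.
- by move=> a b ha hb; rewrite mulrDl memvD.
- by move=> c a ha; rewrite -scalerAl memvZ.
move=> e he; case/memv_addP: hv => v1 /vlineP [c ->] [s sS ->].
have hed : (deg e <= d)%N by rewrite -lez_nat.
rewrite mulrDr -scalerAr mulr1 memvD //.
  by apply: memvZ; apply: mono_W; rewrite lez_nat; apply: leq_trans hed _.
move: s sS; apply: span_ind.
- by rewrite mulr0 mem0v.
- by move=> a b ha hb; rewrite mulrDr memvD.
- by move=> c' a ha; rewrite -scalerAr memvZ.
move=> x /mapP [j _ ->].
have hj : (j < N)%N by [].
have hlow : forall w, w \in FF (deg e) -> w \in W d.+1%:Z.
  move=> w hw; apply: (@W_mono d%:Z); first by rewrite lez_nat.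
  by apply: IH; apply: F_mono hw.
have -> : mono e * yy j = (MM (ce e) * yy j - MM (addd (ce e) j 1)) + MM (addd (ce e) j 1).
  by rewrite mono_Mo subrK.
apply: memvD; first by apply: hlow; rewrite deg_dg; apply: claimC.
have hdg : DG (addd (ce e) j 1) = (deg e).+1 by rewrite dg_addd // deg_dg addn1.
case: (dich (addd (ce e) j 1)) => [hc | [i hi hpi]].
  by apply: (@W_mono (DG (addd (ce e) j 1))%:Z); [rewrite hdg lez_nat | exact: Mo_W].
by apply: hlow; have := Mo_big hpow hp2 hi hpi; rewrite hdg.
Qed.

Lemma W_F d u : u \in W d%:Z -> u \in FF d.
Proof.
move: u; apply: W_ind.
- exact: mem0v.
- by move=> a b ha hb; apply: memvD.
- by move=> c a ha; apply: memvZ.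
move=> e; rewrite lez_nat => he; rewrite mono_Mo; apply: (F_mono he).
rewrite deg_dg; exact: Mo_F.
Qed.

Lemma W_mul (a b : int) u v : u \in W a -> v \in W b -> u * v \in W (a + b).
Proof.
move=> hu hv; move: u hu; apply: W_ind.
- by rewrite mul0r mem0v.
- by move=> x x' hx hx'; rewrite mulrDl memvD.
- by move=> c x hx; rewrite -scalerAl memvZ.
move=> e he; move: v hv; apply: W_ind.
- by rewrite mulr0 mem0v.
- by move=> x x' hx hx'; rewrite mulrDr memvD.
- by move=> c x hx; rewrite -scalerAr memvZ.
move=> f hf; apply: (@W_mono (deg e + deg f)%N%:Z); first by rewrite PoszD lerD.
apply: F_W; apply: F_mul; rewrite mono_Mo deg_dg; exact: Mo_F.
Qed.

Lemma Fm_W d u : u \in Fm N yy d -> u \in W (d%:Z - 1).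
Proof.
case: d => [|d] /=; first by rewrite memv0 => /eqP ->; apply: mem0v.
by move=> hu; rewrite -addn1 PoszD addrK; apply: F_W.
Qed.

Local Notation ph := (phi p iota xb).
Local Notation X := (pbw_monos p iota xb).

Lemma phiD u v : ph (u + v) = ph u + ph v.
Proof. by rewrite /phi -big_split; apply: eq_bigr => e _; rewrite raddfD. Qed.

Lemma phiZ c u : ph (c *: u) = c * ph u.
Proof. by rewrite /phi mulr_sumr; apply: eq_bigr => e _; rewrite linearZ. Qed.

Lemma phi0 : ph 0 = 0.
Proof. by rewrite -(scale0r 0) phiZ mul0r. Qed.

Lemma phi_sum I (r : seq I) (P : pred I) (G : I -> A) :
  ph (\sum_(i <- r | P i) G i) = \sum_(i <- r | P i) ph (G i).
Proof. exact: (big_morph _ phiD phi0). Qed.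

Definition top : E := ec (fun _ => p.-1).
Lemma pm1_lt : (p.-1 < p)%N. Proof. by case: p hp2. Qed.
Lemma top_val o : (top o : nat) = p.-1.
Proof. by rewrite /top ec_val // pm1_lt. Qed.

Definition Dtop := (N * p.-1)%N.

Lemma mono_nth e : X`_(enum_rank e) = mono e.
Proof. by rewrite -tnth_nth tnth_mktuple enum_rankK. Qed.

Lemma coord_mono e e' : coord X (enum_rank e') (mono e) = (e == e')%:R.
Proof.
rewrite -mono_nth coord_free ?(basis_free hPBW) //.
by rewrite (inj_eq (@enum_rank_inj _)).
Qed.

Lemma top_iff (e : E) : [forall i, (e i : nat) == p.-1] = (e == top).
Proof.
apply/forallP/eqP => [h | -> i]; last by rewrite top_val.
by apply/ffunP => o; apply: val_inj; rewrite /= top_val; apply/eqP.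
Qed.

Lemma phi_mono e : ph (mono e) = (e == top)%:R.
Proof.
rewrite /phi (big_pred1 top); first exact: coord_mono.
by move=> e'; rewrite /= top_iff.
Qed.

Lemma deg_top : deg top = Dtop.
Proof.
rewrite /pbw_deg (eq_bigr (fun _ => p.-1)) ?sum_nat_const ?card_ord //.
by move=> o _; rewrite top_val.
Qed.

Lemma phi_W (d : int) u : (d < Dtop%:Z)%R -> u \in W d -> ph u = 0.
Proof.
move=> hd; move: u; apply: W_ind.
- exact: phi0.
- by move=> a b ha hb; rewrite phiD ha hb addr0.
- by move=> c a ha; rewrite phiZ ha mulr0.
move=> e he; rewrite phi_mono; case: eqP => // ee; move: he; rewrite ee deg_top.
by move=> h; have := le_lt_trans h hd; rewrite ltxx.
Qed.

Lemma phi_Fm s u : (s <= Dtop)%N -> u \in Fm N yy s -> ph u = 0.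
Proof.
move=> hs /Fm_W hu; apply: (phi_W _ hu).
have : (s%:Z <= Dtop%:Z)%R by rewrite lez_nat.
lia.
Qed.

Lemma sum_const_ord (c : nat -> nat) : (forall i, (i < N)%N -> c i = p.-1) -> DG c = Dtop.
Proof.
move=> h; rewrite /dg big_mkord (eq_bigr (fun _ => p.-1)) ?sum_nat_const ?card_ord //.
by move=> o _; rewrite h.
Qed.

Lemma phiM c : (DG c <= Dtop)%N ->
  ph (MM c) = ((DG c == Dtop) && [forall o : 'I_N, c o == p.-1])%:R.
Proof.
move=> hD; case: (dich c) => [hc | [i hi hpi]].
  case: (Mo_mono hc) => -> _; rewrite phi_mono.
  have -> : (ec c == top) = [forall o : 'I_N, c o == p.-1].
    rewrite -top_iff; apply: eq_forallb => o; by rewrite ec_val // hc.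
  case: (boolP [forall _, _]) => [/forallP h|]; last by rewrite andbF.
  by rewrite sum_const_ord ?eqxx // => j hj; apply/eqP; apply: (h (Ordinal hj)).
rewrite (phi_Fm hD (Mo_big hpow hp2 hi hpi)).
case: (boolP [forall _, _]) => [/forallP h|]; last by rewrite andbF.
have := h (Ordinal hi); rewrite /= => /eqP hci; move: hpi; rewrite hci => hh.
by have := leq_ltn_trans hh pm1_lt; rewrite ltnn.
Qed.

Lemma phi_mul e f : (deg e + deg f <= Dtop)%N ->
  ph (mono e * mono f) = ((deg e + deg f == Dtop)%N && [forall o, (e o + f o == p.-1)%N])%:R.
Proof.
move=> hD; rewrite !mono_Mo.
have hr := claimKM hcomm (ce e) (ce f).
rewrite -(subrK (MM (fun i => ce e i + ce f i)%N) (MM (ce e) * MM (ce f))) phiD.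
rewrite (phi_Fm _ hr) ?add0r; last by rewrite -!deg_dg.
rewrite phiM dg_add -!deg_dg //.
congr ((_ && _)%:R); apply: eq_forallb => o; by rewrite !ce_ord.
Qed.

Lemma comp_lt (e : E) i : (p.-1 - ce e i < p)%N.
Proof. exact: leq_ltn_trans (leq_subr _ _) pm1_lt. Qed.

Definition comp (e : E) : E := ec (fun i => p.-1 - ce e i)%N.

Lemma comp_val e o : (comp e o : nat) = (p.-1 - e o)%N.
Proof. by rewrite /comp ec_val ?comp_lt // ce_ord. Qed.

Lemma ord_le (o : 'I_p) : (o <= p.-1)%N.
Proof. by rewrite -ltnS (ltn_predK hp2) ltn_ord. Qed.

Lemma deg_comp e : (deg e + deg (comp e))%N = Dtop.
Proof.
rewrite /pbw_deg -big_split /= (eq_bigr (fun _ => p.-1)) ?sum_nat_const ?card_ord //.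
by move=> o _; rewrite comp_val subnKC // ord_le.
Qed.

Lemma keyeq g e : ((deg g + deg (comp e) == Dtop)%N && [forall o, (g o + comp e o == p.-1)%N]) = (g == e).
Proof.
apply/idP/eqP => [/andP [_ /forallP h] | ->].
  apply/ffunP => o; apply: val_inj; have := h o; rewrite comp_val => /eqP.
  have := ord_le (g o); have := ord_le (e o); move=> h1 h2 h3 /=; lia.
have -> : (deg e + deg (comp e) == Dtop) = true by apply/eqP; apply: deg_comp.
rewrite /=; apply/forallP => o; rewrite comp_val subnKC ?ord_le //.
Qed.

Lemma keyeq' g e : ((deg (comp e) + deg g == Dtop)%N && [forall o, (comp e o + g o == p.-1)%N]) = (g == e).
Proof.
rewrite -keyeq addnC; congr (_ && _); apply: eq_forallb => o; by rewrite addnC.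
Qed.

Lemma u_expand u : u = \sum_(e : E) coord X (enum_rank e) u *: mono e.
Proof.
rewrite {1}(coord_basis hPBW (memvf u)).
rewrite (reindex (@enum_rank E)) /=; last first.
  by exists (@enum_val E E) => x _; [rewrite enum_rankK | rewrite enum_valK].
by apply: eq_bigr => e _; rewrite mono_nth.
Qed.

Lemma lead u (d : int) : u \notin W d -> exists e : E,
  (d < (deg e)%:Z)%R /\ ph (u * mono (comp e)) != 0 /\ ph (mono (comp e) * u) != 0.
Proof.
move=> hu.
pose cf e := coord X (enum_rank e) u.
have hux : u = \sum_(e : E) cf e *: mono e := u_expand u.
case: (boolP [exists e, (cf e != 0) && (d < (deg e)%:Z)%R]); last first.
  rewrite negb_exists => /forallP hall; move: hu; rewrite hux.
  case/negP; apply: memv_suml => e _.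
  case: (eqVneq (cf e) 0) => [->|hne]; first by rewrite scale0r mem0v.
  apply: memvZ; apply: mono_W; have := hall e; rewrite hne /= -leNgt; exact.
case/existsP => e0 /andP [h0 hd0].
case: (@arg_maxnP E e0 (fun e => cf e != 0) (fun e => deg e) h0) => e hce hmax.
exists e; split; first by apply: lt_le_trans hd0 _; rewrite lez_nat; apply: hmax.
have hcl : forall g, cf g * ph (mono g * mono (comp e)) = (g == e)%:R * cf e.
  move=> g; case: (eqVneq (cf g) 0) => [hz | hnz].
    rewrite hz mul0r; case: eqP => [ge|]; by [rewrite -ge hz mulr0 | rewrite mul0r].
  rewrite phi_mul ?keyeq; last by rewrite -(deg_comp e) leq_add2r; apply: hmax.
  by case: eqP => [->|]; rewrite ?mulr1 ?mul1r ?mulr0 ?mul0r.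
have hcr : forall g, cf g * ph (mono (comp e) * mono g) = (g == e)%:R * cf e.
  move=> g; case: (eqVneq (cf g) 0) => [hz | hnz].
    rewrite hz mul0r; case: eqP => [ge|]; by [rewrite -ge hz mulr0 | rewrite mul0r].
  rewrite phi_mul ?keyeq'; last by rewrite -(deg_comp e) addnC leq_add2r; apply: hmax.
  by case: eqP => [->|]; rewrite ?mulr1 ?mul1r ?mulr0 ?mul0r.
have hsum : \sum_(g : E) (g == e)%:R * cf e = cf e.
  rewrite (bigD1 e) //= eqxx mul1r big1 ?addr0 // => g /negbTE ->; by rewrite mul0r.
split.
  rewrite hux mulr_suml phi_sum (eq_bigr (fun g => (g == e)%:R * cf e)) ?hsum //.
  by move=> g _; rewrite -scalerAl phiZ hcl.
rewrite hux mulr_sumr phi_sum (eq_bigr (fun g => (g == e)%:R * cf e)) ?hsum //.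
by move=> g _; rewrite -scalerAr phiZ hcr.
Qed.

End PBW.


Definition grow (k : fieldType) p n N (A : falgType k) (iota : 'M[k]_n -> A)
  (xb : N.-tuple 'M[k]_n) m (ws : m.-tuple A) (u : A) : 'rV[k]_m :=
  \row_r phi p iota xb (u * ws`_r).

Fact grow_is_linear (k : fieldType) p n N (A : falgType k) (iota : 'M[k]_n -> A)
  (xb : N.-tuple 'M[k]_n) m (ws : m.-tuple A) : linear (grow p iota xb ws).
Proof.
move=> c u v; apply/rowP => r; rewrite !mxE mulrDl phiD -scalerAl phiZ.
by [].
Qed.

HB.instance Definition _ (k : fieldType) p n N (A : falgType k) (iota : 'M[k]_n -> A)
  (xb : N.-tuple 'M[k]_n) m (ws : m.-tuple A) :=
  GRing.isLinear.Build k A 'rV[k]_m _ (grow p iota xb ws) (grow_is_linear p iota xb ws).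

Theorem theorem3p6
  (k : closedFieldType) (p : nat) (hp : prime p) (hchar : p \in [pchar k])
  (n : nat) (g : {vspace 'M[k]_n}) (hg : restricted_subalg p g)
  (chi : {scalar 'M[k]_n})
  (N : nat) (xb : N.-tuple 'M[k]_n) (hxb : basis_of g xb)
  (A : falgType k) (iota : {linear 'M[k]_n -> A})
  (hU : is_Uchi p g chi iota)
  (hPBW : basis_of fullv (pbw_monos p iota xb))
  (i : int) :
  let V := pbw_filt p iota xb i in
  let b := bform p iota xb in
  let perp u := forall v, v \in V -> b u v = 0 in
  (exists j : int, forall u, u \in pbw_filt p iota xb j <-> perp u) /\
  forall lam : A, block_idem lam ->
    (forall u,
      (u \in block_of lam /\ forall w, w \in proj_block lam V -> b u w = 0)
      <-> (u \in block_of lam /\ perp u)) /\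
    (forall j : int, (forall u, u \in pbw_filt p iota xb j <-> perp u) ->
      (\dim (proj_block lam V) + \dim (block_of lam :&: pbw_filt p iota xb j))%N
        = \dim (block_of lam)).
Proof.
move=> V b perp.
have hp2 : (1 < p)%N := prime_gt1 hp.
have hxg : forall i, (i < N)%N -> nth 0 xb i \in g.
  move=> j hj; case/andP: hxb => /eqP <- _; apply: memv_span; apply: mem_nth.
  by rewrite size_tuple.
have hyS : forall x, x \in g -> iota x \in Sv N (yy iota xb).
  move=> x /(coord_basis hxb) ->; rewrite linear_sum; apply: memv_suml => j _.
  rewrite linearZ; apply: memvZ; exact: y_S.
have hcomm : forall i j, (i < N)%N -> (j < N)%N ->
    yy iota xb i * yy iota xb j - yy iota xb j * yy iota xb i \in Sv N (yy iota xb).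
  move=> i1 j1 hi hj.
  have [h1 _] := hU.1 _ _ (hxg _ hi) (hxg _ hj).
  by have := hyS _ (hg.1 _ _ (hxg _ hi) (hxg _ hj)); rewrite h1.
have hpow : forall i, (i < N)%N -> yy iota xb i ^+ p \in (1 + Sv N (yy iota xb))%VS.
  move=> i1 hi.
  have [_ h2] := hU.1 _ _ (hxg _ hi) (hxg _ hi).
  have -> : yy iota xb i1 ^+ p = (chi (nth 0 xb i1)) ^+ p *: 1 + iota (nth 0 xb i1 ^+ p).
    by rewrite -h2 subrK.
  apply: memv_add; last by apply: hyS; apply: hg.2; exact: hxg.
  by rewrite memvZ // memv_line.
set D := Dtop p N.
have perpW : forall u, u \in pbw_filt p iota xb (D%:Z - 1 - i) <-> perp u.
  move=> u; split.
    move=> hu v hv; rewrite /b /bform; apply: (phi_W hp2 hPBW (d := D%:Z - 1)).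
      lia.
    by have := W_mul hp2 hcomm hpow hu hv; rewrite subrK.
  move=> hperp; case: (boolP (u \in pbw_filt p iota xb (D%:Z - 1 - i))) => // hn.
  case: (lead hp2 hcomm hpow hPBW hn) => e [hd [hne _]].
  case/negP: hne; apply/eqP; apply: hperp; apply: mono_W.
  have := deg_comp hp2 e; rewrite -/D => hdc.
  have hdcz : ((pbw_deg e)%:Z + (pbw_deg (comp hp2 e))%:Z = D%:Z)%R by rewrite -PoszD hdc.
  lia.
split; first by exists (D%:Z - 1 - i).
move=> lam [[hcent hidem] [hne0 _]].
have blk : forall u, u \in block_of lam -> lam * u = u /\ u * lam = u.
  move=> u /prodv_img [a _ ->]; split; first by rewrite mulrA hidem.
  by rewrite -mulrA -hcent mulrA hidem.
have part2 : forall u, u \in block_of lam ->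
    (forall w, w \in proj_block lam V -> b u w = 0) <-> perp u.
  move=> u hB; split => h.
    move=> v hv; rewrite /b /bform -(blk u hB).2 -mulrA.
    by apply: h; apply: memv_mul; [exact: memv_line | exact: hv].
  move=> w /prodv_img [v hv ->]; rewrite /b /bform mulrA (blk u hB).2; exact: h.
split.
  by move=> u; split => [[hB h] | [hB h]]; split => //; apply/(part2 u hB).
move=> j hj.
set B := block_of lam; set Wp := proj_block lam V.
have WpB : (Wp <= B)%VS by apply: prodvSr; apply: subvf.
have W0 : forall w, w \in pbw_filt p iota xb (-1) -> w = 0.
  apply: W_ind; [done | by move=> x y -> ->; rewrite addr0 | by move=> c x ->; rewrite scaler0 | ].
  move=> e he; have : (0 <= (pbw_deg e)%:Z)%R by []. move: he; lia.
have RN : forall w, w \in B -> (forall u, u \in B -> b u w = 0) -> w = 0.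
  move=> w hw h; apply/eqP; apply/negPn/negP => hne.
  have hn : w \notin pbw_filt p iota xb (-1) by apply: contra hne => /W0 ->.
  case: (lead hp2 hcomm hpow hPBW hn) => e [_ [_ hne2]].
  case/negP: hne2; apply/eqP.
  have := h (lam * pbw_mono iota xb (comp hp2 e)).
  rewrite /b /bform hcent -mulrA (blk w hw).1; apply.
  by rewrite /B /block_of -hcent memv_mul ?memv_line ?memvf.
pose m := \dim Wp; pose ws := vbasis Wp.
pose f : 'Hom(A, 'rV[k]_m) := linfun (grow p iota xb ws).
have hf : forall u, f u = grow p iota xb ws u by move=> u; rewrite lfunE.
have growP : forall u, (grow p iota xb ws u == 0) = [forall r : 'I_m, phi p iota xb (u * ws`_r) == 0].
  move=> u; apply/eqP/forallP => [h r | h].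
    by apply/eqP; have := congr1 (fun M : 'rV_m => M 0 r) h; rewrite !mxE.
  by apply/rowP => r; rewrite !mxE; apply/eqP.
have capE : (B :&: lker f)%VS = (B :&: pbw_filt p iota xb j)%VS.
  apply/vspaceP => u; rewrite !memv_cap memv_ker hf growP.
  apply/andP/andP => [[hB /forallP h] | [hB hu]]; split => //.
    apply/hj; apply/(part2 u hB) => w /coord_vbasis ->.
    rewrite /b /bform mulr_sumr phi_sum big1 // => r _.
    by rewrite -scalerAr phiZ (eqP (h r)) mulr0.
  apply/forallP => r; apply/eqP; have /(part2 u hB) h := (hj u).1 hu.
  by apply: h; apply: vbasis_mem; apply: mem_nth; rewrite size_tuple.
have imgE : (f @: B)%VS = fullv.
  apply/subv_anti/andP; split; first exact: subvf.
  apply/subvP => r _.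
  pose d := \dim B; pose bs := vbasis B.
  have bsB : forall i0 : 'I_d, bs`_i0 \in B.
    by move=> i0; apply: vbasis_mem; apply: mem_nth; rewrite size_tuple.
  pose H : 'M[k]_(d, m) := \matrix_(i0, r0) phi p iota xb (bs`_i0 * ws`_r0).
  have Hfull : row_full H.
    have : row_free H^T; last by rewrite /row_free mxrank_tr.
    apply: inj_row_free => v hv.
    pose w := \sum_r0 v 0 r0 *: ws`_r0.
    have hw : w \in B.
      apply: (subvP WpB); apply: memv_suml => r0 _; apply: memvZ.
      by apply: vbasis_mem; apply: mem_nth; rewrite size_tuple.
    have w0 : w = 0.
      apply: (RN w hw) => u /coord_vbasis ->; rewrite /b /bform mulr_suml phi_sum big1 // => i0 _.
      rewrite -scalerAl phiZ.
      have : (v *m H^T) 0 i0 = 0 by rewrite hv mxE.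
      rewrite mxE => hs.
      have -> : (vbasis B)`_i0 * w = \sum_r0 v 0 r0 *: ((vbasis B)`_i0 * ws`_r0).
        by rewrite /w mulr_sumr; apply: eq_bigr => r0 _; rewrite scalerAr.
      rewrite phi_sum (eq_bigr (fun r0 => v 0 r0 * H^T r0 i0)) ?hs ?mulr0 //.
      by move=> r0 _; rewrite phiZ !mxE.
    apply/rowP => r0; rewrite mxE.
    by move/freeP: (basis_free (vbasisP Wp)) => /(_ (fun r1 => v 0 r1) w0).
  case/row_fullP: Hfull => X hX.
  have -> : r = \sum_i0 (r *m X) 0 i0 *: f bs`_i0.
    rewrite -{1}[r]mulmx1 -hX mulmxA mulmx_sum_row; apply: eq_bigr => i0 _.
    by congr (_ *: _); apply/rowP => r'; rewrite hf !mxE.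
  apply: memv_suml => i0 _; apply: memvZ; apply: memv_img; exact: bsB.
have := limg_ker_dim f B; rewrite capE imgE dimvf /= => <-.
rewrite addnC; congr (_ + _)%N; by rewrite /dim /= mul1n.
Qed.
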